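(* Let $\mathcal Y$ be a finite set, $L:\mathcal Y\times\mathcal A\to\mathbb R$ a loss function, and $P_Y,Q_Y$ distributions on $\mathcal Y$. (a) If $D_{\chi^2}(P_Y\|Q_Y)\le\beta^2$, then $D_L(P_Y\|Q_Y)=O(\beta)$. (b) If, in addition, $H_L(Y)$ is twice differentiable in $P_Y$, then $D_L(P_Y\|Q_Y)=O(\beta^2)$.
   Context: Minima are assumed attained. A Bayes action $a_P$ of a distribution $P$ on $\mathcal Y$ is a minimizer of $a\mapsto\mathbb E_{Y\sim P}[L(Y,a)]$; $H_L(Y)=\min_{a\in\mathcal A}\mathbb E_{Y\sim P_Y}[L(Y,a)]$, viewed as a function of the probability vector $P_Y$. The $L$-divergence is $D_L(P\|Q)=\mathbb E_{Y\sim P}[L(Y,a_Q)]-\mathbb E_{Y\sim P}[L(Y,a_P)]\ge0$. Neyman's $\chi^2$-divergence is $D_{\chi^2}(P\|Q)=\sum_y\frac{(P(y)-Q(y))^2}{Q(y)}$ ($0^2/0=0$). Big-O is as $\beta\to0$ with $Q_Y$ and $L$ fixed. *)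

(* Defs.v *)
From HB Require Import structures.
From mathcomp Require Import all_boot all_order all_algebra.
From mathcomp Require Import all_classical all_reals all_analysis.
Set Implicit Arguments. Unset Strict Implicit. Unset Printing Implicit Defensive.
Import Order.TTheory GRing.Theory Num.Theory.
Import numFieldNormedType.Exports.
Local Open Scope ring_scope.
Local Open Scope classical_set_scope.

(* The finite label set Y is encoded as 'I_n; a distribution (probability
   vector) on Y is a row vector P : 'rV[R]_n with P 0 y = P(y). *)
Section Defs.
Context {R : realType} {n : nat} {A : Type}.

Definition is_distr (P : 'rV[R]_n) : Prop :=
  (forall i, 0 <= P 0 i) /\ \sum_i P 0 i = 1.

Definition simplex : set 'rV[R]_n := [set P | is_distr P].

Definition expL (L : 'I_n -> A -> R) (P : 'rV[R]_n) (a : A) : R :=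
  \sum_i P 0 i * L i a.

Definition bayes_action (L : 'I_n -> A -> R) (P : 'rV[R]_n) (a : A) : Prop :=
  forall a', expL L P a <= expL L P a'.

Definition HL (L : 'I_n -> A -> R) (P : 'rV[R]_n) : R :=
  inf (range (expL L P)).

(* L-divergence, given Bayes actions aP of P and aQ of Q *)
Definition DL (L : 'I_n -> A -> R) (P : 'rV[R]_n) (aP aQ : A) : R :=
  expL L P aQ - expL L P aP.

Definition chi2 (P Q : 'rV[R]_n) : \bar R :=
  (\sum_(i < n)
     (if Q 0%R i == 0%R then (if P 0%R i == 0%R then 0%E else +oo%E)
      else (((P 0%R i - Q 0%R i) ^+ 2 / Q 0%R i)%R)%:E))%E.

Definition twice_differentiable_on (U : set 'rV[R]_n) (h : 'rV[R]_n -> R) : Prop :=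
  (forall x, U x -> differentiable h x) /\
  (forall (v : 'rV[R]_n) x, U x -> differentiable (fun z => 'd h z v) x).

End Defs.

(* Main.v *)
Require Import Defs.
From HB Require Import structures.
From mathcomp Require Import all_boot all_order all_algebra.
From mathcomp Require Import all_classical all_reals all_analysis.
From mathcomp Require Import ring lra.
Import Order.TTheory GRing.Theory Num.Theory.
Import numFieldNormedType.Exports.
Local Open Scope ring_scope.
Local Open Scope classical_set_scope.


Lemma expLD {R : realType} {n : nat} {A : Type} (L : 'I_n -> A -> R) (P Q : 'rV[R]_n) a :
  expL L (P + Q) a = expL L P a + expL L Q a.
Proof. by rewrite /expL -big_split; apply: eq_bigr => i _; rewrite mxE mulrDl. Qed.

Lemma expLZ {R : realType} {n : nat} {A : Type} (L : 'I_n -> A -> R) (P : 'rV[R]_n) c a :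
  expL L (c *: P) a = c * expL L P a.
Proof. by rewrite /expL mulr_sumr; apply: eq_bigr => i _; rewrite mxE mulrA. Qed.

Lemma expLN {R : realType} {n : nat} {A : Type} (L : 'I_n -> A -> R) (P : 'rV[R]_n) a :
  expL L (- P) a = - expL L P a.
Proof. by rewrite -scaleN1r expLZ mulN1r. Qed.

Lemma expLB {R : realType} {n : nat} {A : Type} (L : 'I_n -> A -> R) (P Q : 'rV[R]_n) a :
  expL L (P - Q) a = expL L P a - expL L Q a.
Proof. by rewrite expLD expLN. Qed.

Lemma HL_le {R : realType} {n : nat} {A : Type} (L : 'I_n -> A -> R)
  (attained : forall P : 'rV[R]_n, is_distr P -> exists a, bayes_action L P a)
  P a : is_distr P -> HL L P <= expL L P a.
Proof.
move=> /attained [b hb]; apply: ge_inf; last by exists a.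
by exists (expL L P b) => _ [c _ <-]; apply: hb.
Qed.

Lemma HL_eq {R : realType} {n : nat} {A : Type} (L : 'I_n -> A -> R) P a :
  bayes_action L P a -> HL L P = expL L P a.
Proof.
move=> ha; apply/le_anti/andP; split.
  by apply: ge_inf; [exists (expL L P a) => _ [c _ <-]; apply: ha| exists a].
by apply: lb_le_inf; [exists (expL L P a); exists a| move=> _ [c _ <-]; apply: ha].
Qed.

Lemma distr_seg {R : realType} {n : nat} (X Y : 'rV[R]_n) (t : R) :
  is_distr X -> is_distr Y -> 0 <= t <= 1 -> is_distr (t *: (Y - X) + X).
Proof.
move=> [X0 X1] [Y0 Y1] /andP[t0 t1]; split.
  move=> i; rewrite !mxE.
  have -> : t * (Y 0 i - X 0 i) + X 0 i = t * Y 0 i + (1 - t) * X 0 i by ring.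
  by rewrite addr_ge0 ?mulr_ge0 ?subr_ge0.
rewrite (eq_bigr (fun i => t * Y 0 i + (1 - t) * X 0 i)); last first.
  by move=> i _; rewrite !mxE; ring.
by rewrite big_split /= -!mulr_sumr X1 Y1; ring.
Qed.

Lemma HL_concave {R : realType} {n : nat} {A : Type} (L : 'I_n -> A -> R)
  (attained : forall P : 'rV[R]_n, is_distr P -> exists a, bayes_action L P a)
  X Y (t : R) : is_distr X -> is_distr Y -> 0 <= t <= 1 ->
  (1 - t) * HL L X + t * HL L Y <= HL L (t *: (Y - X) + X).
Proof.
move=> hX hY ht; have hZ := @distr_seg _ _ X Y t hX hY ht.
have [a ha] := attained _ hZ; rewrite (HL_eq _ _ _ ha) expLD expLZ expLB.
have -> : t * (expL L Y a - expL L X a) + expL L X a =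
          (1 - t) * expL L X a + t * expL L Y a by ring.
case/andP: ht => t0 t1.
by rewrite lerD ?ler_wpM2l ?subr_ge0 ?(HL_le _ attained).
Qed.


Lemma grad_ineq {R : realType} {n : nat} {A : Type} (L : 'I_n -> A -> R)
  (attained : forall P : 'rV[R]_n, is_distr P -> exists a, bayes_action L P a)
  (h : 'rV[R]_n -> R) (hh : forall P, simplex P -> h P = HL L P) X Y :
  is_distr X -> is_distr Y -> differentiable h X -> h Y - h X <= 'd h X (Y - X).
Proof.
move=> hX hY dX.
have dv := @diff_derivable _ _ _ h X (Y - X) dX.
rewrite -deriveE //.
have cv := cvg_dnbhs_at_right dv.
apply: (cvgr_to_ge cv).
near=> t.
have t0 : 0 < t by near: t; exact: nbhs_right_gt.
have t1 : t <= 1 by near: t; apply: nbhs_right_le; exact: ltr01.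
rewrite /= !hh //; last by apply: distr_seg => //; rewrite t1 ltW.
have := @HL_concave _ _ _ L attained X Y t hX hY; rewrite ltW // t1 => /(_ isT) H.
rewrite -(ler_pM2l t0) /GRing.scale /= mulrA mulfV ?gt_eqF // mul1r.
by lra.
Unshelve. all: by end_near.
Qed.


Lemma diff_lip {R : realType} {n : nat} (f : 'rV[R]_n -> R) x :
  differentiable f x -> exists k r : R, 0 < r /\
    forall z, `|z - x| < r -> `|f z - f x| <= k * `|z - x|.
Proof.
move=> df.
have := diff_locally df; move/eqaddoP => /(_ 1 ltr01).
move/nbhs_ballP => [r r0 Hr].
have [k k0 hk] := linear_lipschitz (diff_continuous df).
exists (k + 1), r; split => // z hz.
have := Hr (z - x); rewrite -ball_normE /= sub0r normrN => /(_ hz).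
rewrite !fctE subrK mul1r => H.
have -> : f z - f x = (f z - (f x + 'd f x (z - x))) + 'd f x (z - x) by ring.
rewrite mulrDl mul1r addrC.
apply: (le_trans (ler_normD _ _)); apply: lerD => //; exact: hk.
Qed.


Lemma entry_le_norm {R : realType} {n : nat} (v : 'rV[R]_n) i : `|v 0 i| <= `|v|.
Proof.
rewrite [X in _ <= X]mx_normrE.
exact: (le_bigmax 0 (fun ij : 'I_1 * 'I_n => `|v ij.1 ij.2|) (0, i)).
Qed.

Lemma norm_le {R : realType} {n : nat} (v : 'rV[R]_n) b :
  0 <= b -> (forall i, `|v 0 i| <= b) -> `|v| <= b.
Proof.
move=> b0 hb; rewrite [X in X <= _]mx_normrE.
apply: bigmax_le => // -[i j] _ /=; rewrite (ord1 i); exact: hb.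
Qed.

Lemma distr_le1 {R : realType} {n : nat} (P : 'rV[R]_n) i : is_distr P -> P 0 i <= 1.
Proof.
move=> [P0 P1]; rewrite -P1 (bigD1 i) //= lerDl.
by apply: sumr_ge0 => j _; exact: P0.
Qed.

Lemma chi2_facts {R : realType} {n : nat} (P Q : 'rV[R]_n) (beta : R) :
  is_distr P -> is_distr Q -> 0 < beta -> (chi2 P Q <= (beta ^+ 2)%:E)%E ->
  forall i, (Q 0 i = 0 -> P 0 i = 0) /\ `|P 0 i - Q 0 i| <= beta.
Proof.
move=> hP hQ b0 hc i.
pose T := fun j : 'I_n => (if Q 0%R j == 0%R then (if P 0%R j == 0%R then 0%E else +oo%E)
      else (((P 0%R j - Q 0%R j) ^+ 2 / Q 0%R j)%R)%:E)%E.
have Tge0 : forall j, (0 <= T j)%E.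
  move=> j; rewrite /T; case: eqP => Qj; first by case: eqP.
  rewrite lee_fin divr_ge0 ?sqr_ge0 //; exact: hQ.1.
have Ti : (T i <= (beta ^+ 2)%:E)%E.
  apply: le_trans hc; rewrite /chi2 (bigD1 i) //= -/(T i).
  apply: leeDl; apply: sume_ge0 => j _; exact: Tge0.
move: Ti; rewrite /T; case: eqP => Qi.
  case: eqP => Pi // _; split => // ; rewrite Pi Qi subrr normr0 ltW //.
rewrite lee_fin => H; split => // .
have Qi0 : 0 < Q 0 i by rewrite lt_neqAle eq_sym; apply/andP; split; [exact/eqP|exact: hQ.1].
have Q1 := distr_le1 Q i hQ.
rewrite ler_pdivrMr // in H.
have H2 : (P 0 i - Q 0 i) ^+ 2 <= beta ^+ 2 by apply: (le_trans H); rewrite ler_piMr ?sqr_ge0.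
rewrite leNgt; apply/negP => H3.
have : beta ^+ 2 < `|P 0 i - Q 0 i| ^+ 2 by rewrite ltr_pXn2r // ?ltW // ?(lt_trans b0) // ?nnegrE ?ltW // ?(lt_trans b0).
by rewrite real_normK ?num_real // ltNge H2.
Qed.


Lemma exists_min_pos {R : realType} {n : nat} (F : 'I_n -> R) :
  (forall i, 0 < F i) -> exists b : R, 0 < b /\ b <= 1 /\ forall i, b <= F i.
Proof.
move=> hF; exists (\big[Order.min/1]_i F i); split; last split.
- by apply: lt_bigmin => // i _; exact: hF.
- by apply: bigmin_le_id.
- by move=> i; exact: bigmin_le.
Qed.

Lemma exists_bmin {R : realType} {n : nat} (Q : 'rV[R]_n) : is_distr Q ->
  exists b : R, 0 < b /\ forall i, Q 0 i != 0 -> b <= Q 0 i / 2.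
Proof.
move=> hQ.
have hpos : forall i, 0 < (fun i => if Q 0 i == 0 then 1 else Q 0 i / 2) i.
  move=> i /=; case: eqP => // /eqP Qi; apply: divr_gt0 => //.
  by rewrite lt_neqAle eq_sym Qi; exact: hQ.1.
have [b [b0 [_ hb]]] := @exists_min_pos _ _ _ hpos.
exists b; split => // i Qi; have := hb i; by rewrite (negbTE Qi).
Qed.

Lemma delta_distr {R : realType} {n : nat} (i : 'I_n) : is_distr (delta_mx 0 i : 'rV[R]_n).
Proof.
split; first by move=> j; rewrite mxE; case: (_ && _).
rewrite (bigD1 i) //= big1 ?mxE ?eqxx ?addr0 // => j /negbTE ji.
by rewrite mxE ji andbF.
Qed.

Lemma expL_delta {R : realType} {n : nat} {A : Type} (L : 'I_n -> A -> R) i a :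
  expL L (delta_mx 0 i) a = L i a.
Proof.
rewrite /expL (bigD1 i) //= big1 ?mxE ?eqxx ?addr0 ?mul1r // => j /negbTE ji.
by rewrite mxE ji andbF mul0r.
Qed.

Lemma part_a {R : realType} {n : nat} {A : Type} (L : 'I_n -> A -> R)
  (attained : forall P : 'rV[R]_n, is_distr P -> exists a, bayes_action L P a)
  (Q : 'rV[R]_n) (hQ : is_distr Q) (aQ : A) (haQ : bayes_action L Q aQ) :
  (exists C beta0 : R, 0 < beta0 /\
     forall (beta : R) (P : 'rV[R]_n) (aP : A),
       0 < beta < beta0 -> is_distr P -> bayes_action L P aP ->
       (chi2 P Q <= (beta ^+ 2)%:E)%E ->
       `| DL L P aP aQ | <= C * beta).
Proof.
have [m hm] : exists m : 'I_n -> R, forall i a, m i <= L i a.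
  have /choice [f hf] : forall i, exists a, bayes_action L (delta_mx 0 i) a.
    by move=> i; apply: attained; exact: delta_distr.
  exists (fun i => L i (f i)) => i a; have := hf i a; by rewrite !expL_delta.
have [b [b0 hb]] := exists_bmin Q hQ.
pose K1 := \sum_i `|L i aQ - m i|.
have K1ge0 : 0 <= K1 by apply: sumr_ge0 => i _.
exists (K1 * (1 + b^-1)), b; split => // beta P aP /andP[be0 beb] hP haP hc.
have hf := chi2_facts P Q beta hP hQ be0 hc.
have DL0 : 0 <= DL L P aP aQ by rewrite /DL subr_ge0; exact: haP.
rewrite ger0_norm //.
pose e i := L i aP - m i.
have E : \sum_i (P 0 i - Q 0 i) * (L i aQ - L i aP) =
   DL L P aP aQ - (expL L Q aQ - expL L Q aP).
  rewrite /DL /expL -!sumrB; apply: eq_bigr => i _; ring.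
have step1 : DL L P aP aQ <= \sum_i (P 0 i - Q 0 i) * (L i aQ - L i aP).
  by rewrite E; have := haQ aP; lra.
have term : forall i, (P 0 i - Q 0 i) * (L i aQ - L i aP) <=
    beta * `|L i aQ - m i| + beta / b * (P 0 i * e i).
  move=> i; have [Pi Vi] := hf i.
  have ei : 0 <= e i by rewrite /e subr_ge0.
  have Pi0 : 0 <= P 0 i by exact: (hP.1 i).
  have -> : (P 0 i - Q 0 i) * (L i aQ - L i aP) =
    (P 0 i - Q 0 i) * (L i aQ - m i) - (P 0 i - Q 0 i) * e i by rewrite /e; ring.
  apply: lerD.
    apply: (le_trans (ler_norm _)); rewrite normrM ler_wpM2r //.
  case: (eqVneq (Q 0 i) 0) => Qi.
    by rewrite (Pi Qi) Qi subrr !mul0r oppr0 mulr0.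
  have hbi := hb i Qi.
  have bP : b <= P 0 i.
    move: Vi; rewrite ler_norml => /andP[V1 V2]; lra.
  apply: (le_trans (ler_norm _)); rewrite normrN normrM (ger0_norm ei).
  apply: (le_trans (ler_wpM2r ei Vi)).
  have -> : beta * e i = beta / b * (b * e i) by rewrite mulrA divfK ?gt_eqF.
  by apply: ler_wpM2l; [rewrite divr_ge0 ?ltW|apply: ler_wpM2r].
have S : \sum_i P 0 i * e i <= K1.
  apply: (@le_trans _ _ (\sum_i P 0 i * (L i aQ - m i))).
    have := haP aQ; rewrite /expL /e => H.
    under eq_bigr => i _ do rewrite mulrBr.
    under [X in _ <= X]eq_bigr => i _ do rewrite mulrBr.
    rewrite !sumrB; lra.
  apply: ler_sum => i _.
  have P1 := distr_le1 P i hP.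
  have Pi0 : 0 <= P 0 i by exact: (hP.1 i).
  apply: (le_trans (ler_wpM2l Pi0 (ler_norm _))).
  by rewrite ler_piMl ?normr_ge0.
apply: (le_trans step1); apply: (le_trans (ler_sum _ (fun i _ => term i))).
rewrite big_split /= -!mulr_sumr -/K1.
have H : beta / b * \sum_i P 0 i * e i <= beta / b * K1.
  by apply: ler_wpM2l => //; rewrite divr_ge0 ?ltW.
have -> : K1 * (1 + b^-1) * beta = beta * K1 + beta / b * K1 by ring.
lra.
Qed.

Lemma key_ineq {R : realType} (x1 x2 HLQ HLP HLW EWv EQ lv dP dW : R) :
  HLQ - HLP <= - dP -> HLQ - HLW <= 2^-1 * dW -> HLP = x2 -> HLQ = EQ ->
  HLW <= EWv -> EWv = EQ - 2^-1 * lv -> x1 = lv + EQ -> x1 - x2 <= dW - dP.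
Proof. move=> *; lra. Qed.
Lemma half_bound {R : realType} (p q b : R) : - b <= p - q -> p - q <= b -> 0 < b ->
  - b <= q - 2^-1 * (p - q) - q <= b.
Proof. move=> *; apply/andP; split; lra. Qed.
Lemma tri_bound {R : realType} (a b c : R) : `|a - b| <= `|a - c| + `|b - c|.
Proof.
have -> : a - b = (a - c) - (b - c) by ring.
exact: ler_normB.
Qed.


Lemma part_b {R : realType} {n : nat} {A : Type} (L : 'I_n -> A -> R)
  (attained : forall P : 'rV[R]_n, is_distr P -> exists a, bayes_action L P a)
  (Q : 'rV[R]_n) (hQ : is_distr Q) (aQ : A) (haQ : bayes_action L Q aQ) :
  ((exists (U : set 'rV[R]_n) (h : 'rV[R]_n -> R),
      open U /\ simplex `<=` U /\ (forall P, simplex P -> h P = HL L P) /\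
      twice_differentiable_on U h) ->
   exists C beta0 : R, 0 < beta0 /\
     forall (beta : R) (P : 'rV[R]_n) (aP : A),
       0 < beta < beta0 -> is_distr P -> bayes_action L P aP ->
       (chi2 P Q <= (beta ^+ 2)%:E)%E ->
       `| DL L P aP aQ | <= C * beta ^+ 2).
Proof.
move=> [U [h [oU [sU [hh [d1 d2]]]]]].
pose f (j : 'I_n) z := 'd h z ('e_j : 'rV[R]_n).
have lipj : forall j, exists kr : R * R, 0 < kr.2 /\
    forall z, `|z - Q| < kr.2 -> `|f j z - f j Q| <= kr.1 * `|z - Q|.
  move=> j; have [k [r [r0 H]]] := diff_lip _ _ (d2 ('e_j) Q (sU Q hQ)).
  by exists (k, r); split.
have [F hF] := choice lipj.
have Fpos : forall j, 0 < (fun j => (F j).2) j by move=> j; exact: (hF j).1.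
have [r [r0 [_ hr]]] := @exists_min_pos _ _ _ Fpos.
have [b [b0 hb]] := exists_bmin Q hQ.
pose K := \sum_j `|(F j).1|.
have K0 : 0 <= K by apply: sumr_ge0.
exists (2 * K), (Order.min b r); split; first by rewrite lt_min b0 r0.
move=> beta P aP /andP[be0]; rewrite lt_min => /andP[beb ber] hP haP hc.
have hf := chi2_facts P Q beta hP hQ be0 hc.
pose v : 'rV[R]_n := P - Q.
pose W : 'rV[R]_n := Q - 2^-1 *: v.
have hW : is_distr W.
  split.
    move=> i; rewrite !mxE; have [Pi Vi] := hf i.
    case: (eqVneq (Q 0 i) 0) => Qi.
      by rewrite (Pi Qi) Qi subrr mulr0 subrr.
    have := hb i Qi; move: Vi; rewrite ler_norml => /andP[V1 V2] H; lra.
  under eq_bigr => i _ do rewrite !mxE.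
  by rewrite sumrB -mulr_sumr sumrB hP.2 hQ.2 subrr mulr0 subr0.
have Ps : simplex P by [].
have Qs : simplex Q by [].
have Ws : simplex W by [].
have G1 := grad_ineq L attained h hh P Q hP hQ (d1 P (sU P Ps)).
have G2 := grad_ineq L attained h hh W Q hW hQ (d1 W (sU W Ws)).
have e1 : Q - P = - v by rewrite /v opprB.
have e2 : Q - W = 2^-1 *: v by rewrite /W opprB addrC subrK.
rewrite e1 linearN /= in G1.
rewrite e2 linearZ /= in G2.
rewrite !hh // in G1 G2.
have HP := HL_eq L P aP haP.
have HQ := HL_eq L Q aQ haQ.
have HW := HL_le L attained W aQ hW.
have EW : expL L W aQ = expL L Q aQ - 2^-1 * expL L v aQ by rewrite /W expLB expLZ.
have EP : expL L P aQ = expL L v aQ + expL L Q aQ by rewrite -expLD /v subrK.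
have key : DL L P aP aQ <= 'd h W v - 'd h P v.
  have G2' : HL L Q - HL L W <= 2^-1 * 'd h W v := G2.
  rewrite /DL; exact: (key_ineq _ _ _ _ _ _ _ _ _ _ G1 G2' HP HQ HW EW EP).
have DL0 : 0 <= DL L P aP aQ by rewrite /DL subr_ge0; exact: haP.
rewrite ger0_norm //; apply: (le_trans key).

have decomp : forall z : 'rV[R]_n, 'd h z v = \sum_j v 0 j * f j z.
  move=> z; rewrite {1}(row_sum_delta v) linear_sum; apply: eq_bigr => j _.
  by rewrite linearZ.
apply: (@le_trans _ _ (\sum_j v 0 j * f j W - \sum_j v 0 j * f j P)).
  have E : 'd h W v - 'd h P v = \sum_j v 0 j * f j W - \sum_j v 0 j * f j P.
    by congr (_ - _); [exact: (decomp W)|exact: (decomp P)].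
  by rewrite -E lexx.
rewrite -sumrB.
apply: (le_trans (ler_norm _)); apply: (le_trans (ler_norm_sum _ _ _)).
rewrite (_ : 2 * K * beta ^+ 2 = \sum_j beta * (`|(F j).1| * beta + `|(F j).1| * beta)); last first.
  by rewrite /K mulr_sumr mulr_suml; apply: eq_bigr => j _; ring.
have nP : `|P - Q| <= beta.
  apply: norm_le; first exact: ltW.
  by move=> i; rewrite !mxE; exact: (hf i).2.
have nW : `|W - Q| <= beta.
  apply: norm_le; first exact: ltW.
  move=> i; rewrite /W /v !mxE; have := (hf i).2; rewrite !ler_norml => /andP[V1 V2].
  exact: half_bound.
have lipb : forall j z, `|z - Q| <= beta -> `|f j z - f j Q| <= `|(F j).1| * beta.
  move=> j z hz.
  have hzr : `|z - Q| < (F j).2 by apply: (le_lt_trans hz); apply: (lt_le_trans ber); exact: hr.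
  apply: (le_trans ((hF j).2 z hzr)).
  apply: (le_trans (ler_norm _)); rewrite normrM normr_id.
  by apply: ler_wpM2l.
apply: ler_sum => j _.
rewrite -mulrBr normrM.
have vj : `|v 0 j| <= beta by rewrite /v !mxE; exact: (hf j).2.
apply: ler_pM => //.
apply: (le_trans (tri_bound _ _ (f j Q))); apply: lerD; exact: lipb.
Qed.

Theorem lemma8p2 (R : realType) (n : nat) (A : Type) (L : 'I_n -> A -> R)
  (attained : forall P : 'rV[R]_n, is_distr P -> exists a, bayes_action L P a)
  (Q : 'rV[R]_n) (hQ : is_distr Q) (aQ : A) (haQ : bayes_action L Q aQ) :
  (exists C beta0 : R, 0 < beta0 /\
     forall (beta : R) (P : 'rV[R]_n) (aP : A),
       0 < beta < beta0 -> is_distr P -> bayes_action L P aP ->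
       (chi2 P Q <= (beta ^+ 2)%:E)%E ->
       `| DL L P aP aQ | <= C * beta)
  /\
  ((exists (U : set 'rV[R]_n) (h : 'rV[R]_n -> R),
      open U /\ simplex `<=` U /\ (forall P, simplex P -> h P = HL L P) /\
      twice_differentiable_on U h) ->
   exists C beta0 : R, 0 < beta0 /\
     forall (beta : R) (P : 'rV[R]_n) (aP : A),
       0 < beta < beta0 -> is_distr P -> bayes_action L P aP ->
       (chi2 P Q <= (beta ^+ 2)%:E)%E ->
       `| DL L P aP aQ | <= C * beta ^+ 2).
Proof.
split; first exact: part_a.
exact: part_b.
Qed.
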